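(* Assume the standing setup below. For every $k\in\omega$ there is a $k$-enveloping embedding $\varphi:\mathbf H\to\mathbf G$.
   Context: Standing setup: $L$ is a relational language with no unary relations and with $n_i<\omega$ relations of arity $i$, named $R_{i,j}$ ($1\le j\le n_i$); $\mathbf H$ is a countable $L$-hypergraph with vertex set $\omega$, universal for all countable $L$-hypergraphs (an $L$-hypergraph: all relations injective and symmetric, each set of vertices in at most one relation; embeddings are monotone w.r.t. the enumerations). Let $\mu$ be the largest integer with $n_\mu>0$ (or $\omega$ if none). The signature $\sigma=(\sigma_1,\sigma_2,\dots)$ is $\sigma_i=n_{i+1}+2$ if $i<\mu$ and $\sigma_i=1$ otherwise; $\sigma^{(i)}_j=\sigma_{j+i}$. $I^n_\ell$ denotes the set of tuples $(i_0,\dots,i_{\ell-1})$ with $n>i_0>\dots>i_{\ell-1}\ge0$ and $I^n_{<\omega}=\bigcup_{\ell\ge1}I^n_\ell$; a $\sigma$-valuation function of level $n$ is $f:I^n_{<\omega}\to\omega$ with $f(\bar x)<\sigma_\ell$ for $\bar x\in I^n_\ell$, $|f|=n$. $\mathbf T=(T_0,T_1,\dots)$ with $T_i$ the tree of $\sigma^{(i)}$-valuation functions of finite level ordered by inclusion. $\mathbf G$ is the $L$-hypergraph with vertex set $T_0$ in which, for $x_0,\dots,x_{i-1}\in T_0$ with $|x_0|>\dots>|x_{i-1}|$ ($i\ge2$), $\{x_0,\dots,x_{i-1}\}\in R_{i,j}^{\mathbf G}$ iff $x_0(|x_1|,\dots,|x_{i-1}|)=j$ (and no other sets are related), enumerated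 by: $f\le g$ iff $|f|<|g|$, or $|f|=|g|$ and $f(\bar x)<g(\bar x)$ at the lexicographically smallest $\bar x$ where they differ. Slices: for a valuation function $f$ of level $n$ and $\bar x=(x_0,\dots,x_{m-1})$ with $n>x_0>\dots>x_{m-1}\ge0$, the $\bar x$-slice $f^{\bar x}$ is the valuation function of level $x_{m-1}$ given by $f^{\bar x}(\bar y)=f(\bar x^\frown\bar y)$; an $m$-slice is an $\bar x$-slice with $|\bar x|=m$ (the $0$-slice is $f$; $m$-slices of elements of $T_0$ are elements of $T_m$). $k$-enveloping: an embedding $\varphi:\mathbf H\to\mathbf G$ with range $R$ is $k$-enveloping if there is a partition $\omega=O\cup B$, $O\cap B=\emptyset$, such that for every $f\in R$, every $m<k$ and every $\bar x=(x_0,\dots,x_{m-1})$ for which $f^{\bar x}$ is defined: (1) if $f^{\bar x}$ is not constant zero then $x_i\in O$ for all $i$; (2) if $g\in R$ or $g$ is a constant zero valuation function, $g'$ is an $m$-slice of $g$, and $f^{\bar x}$ and $g'$ are incomparable in $T_m$, then $|f^{\bar x}\wedge g'|\in B$. *)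

(* Defs.v *)
From mathcomp Require Import all_boot.
Set Implicit Arguments. Unset Strict Implicit. Unset Printing Implicit Defensive.

(* The language L is given by n : nat -> nat, n i = number of relations of
   arity i (relations R_{i,j}, 1 <= j <= n i).  n 0 is ignored. *)

(* An L-hypergraph on vertex type V is represented by a labelling E of finite
   lists of vertices: E s = j >= 1 means that the set of elements of s is in
   R_{size s, j}; E s = 0 means that it is in no relation.  Relations are
   injective (s duplicate-free) and symmetric (invariant under permutation),
   and each set is in at most one relation (E is a function). *)
Definition is_hyp (n : nat -> nat) (V : eqType) (E : seq V -> nat) : Prop :=
  [/\ (forall s, E s <> 0 -> uniq s /\ 2 <= size s),
      (forall s, E s <= n (size s)) &
      (forall s t, perm_eq s t -> E s = E t)].

Definition hyp_emb (A B : seq nat -> nat) (e : nat -> nat) : Prop :=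
  (forall x y, x < y -> e x < e y) /\
  (forall s : seq nat, uniq s -> A s = B (map e s)).

(* H is universal for countable L-hypergraphs (those with vertex set omega;
   finite ones embed into those by adding isolated vertices at the end). *)
Definition universal (n : nat -> nat) (H : seq nat -> nat) : Prop :=
  forall A : seq nat -> nat, is_hyp n A -> exists e, hyp_emb A H e.

(* "i < mu": mu is the largest arity m >= 1 with n m > 0, or omega if there is
   no largest such m.  So i < mu iff there is no such largest m with m <= i. *)
Definition lt_mu (n : nat -> nat) (i : nat) : Prop :=
  ~ (exists m, [/\ 1 <= m, 0 < n m, (forall j, m < j -> n j = 0) & m <= i]).

(* v < sigma_i, where sigma_i = n_{i+1} + 2 if i < mu and 1 otherwise. *)
Definition lt_sigma (n : nat -> nat) (i v : nat) : Prop :=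
  (lt_mu n i -> v < n i.+1 + 2) /\ (~ lt_mu n i -> v < 1).

Definition inI (l : nat) (x : seq nat) : bool :=
  [&& 0 < size x, sorted (fun a b => b < a) x & all (fun a => a < l) x].

(* A valuation function is represented by its level and a function on lists
   of naturals, required to vanish outside I^level_{<omega}. *)
Definition vfun := (nat * (seq nat -> nat))%type.
Definition lvl (f : vfun) : nat := f.1.

(* f is an element of T_m, i.e. a sigma^(m)-valuation function
   (sigma^(m)_j = sigma_{j+m}). *)
Definition inT (n : nat -> nat) (m : nat) (f : vfun) : Prop :=
  (forall x, inI f.1 x -> lt_sigma n (size x + m) (f.2 x)) /\
  (forall x, ~~ inI f.1 x -> f.2 x = 0).

Definition agree (f g : vfun) (l : nat) : Prop :=
  forall x, inI l x -> f.2 x = g.2 x.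

Definition tle (f g : vfun) : Prop := f.1 <= g.1 /\ agree f g f.1.
Definition comparable (f g : vfun) : Prop := tle f g \/ tle g f.

Definition meet_lvl (f g : vfun) (l : nat) : Prop :=
  [/\ l <= f.1, l <= g.1, agree f g l &
      forall l', l' <= f.1 -> l' <= g.1 -> agree f g l' -> l' <= l].

Fixpoint lexlt (s t : seq nat) : bool :=
  match s, t with
  | [::], [::] => false
  | [::], _ :: _ => true
  | _ :: _, [::] => false
  | a :: s', b :: t' => (a < b) || ((a == b) && lexlt s' t')
  end.

Definition ltG (f g : vfun) : Prop :=
  f.1 < g.1 \/
  (f.1 = g.1 /\ exists x, [/\ inI f.1 x, f.2 x < g.2 x &
      forall y, inI f.1 y -> lexlt y x -> f.2 y = g.2 y]).

(* label of a set of vertices of G (0 = no relation):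
   sort by decreasing level; if the levels are pairwise distinct,
   x_0 :: rest, the set is in R_{i,j} with j = x_0(|x_1|,...,|x_{i-1}|)
   provided 1 <= j <= n_i. *)
Definition labelG (n : nat -> nat) (s : seq vfun) : nat :=
  let t := sort (fun a b : vfun => b.1 <= a.1) s in
  if sorted (fun a b : vfun => b.1 < a.1) t then
    match t with
    | x0 :: rest =>
        let j := x0.2 (map lvl rest) in
        if (1 <= j) && (j <= n (size s)) then j else 0
    | [::] => 0
    end
  else 0.

Definition embHG (n : nat -> nat) (H : seq nat -> nat) (phi : nat -> vfun) : Prop :=
  [/\ (forall v, inT n 0 (phi v)),
      (forall v w, v < w -> ltG (phi v) (phi w)) &
      (forall s : seq nat, uniq s -> 2 <= size s -> H s = labelG n (map phi s))].

Definition slice_def (f : vfun) (x : seq nat) : bool :=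
  sorted (fun a b => b < a) x && all (fun a => a < f.1) x.

Definition slice (f : vfun) (x : seq nat) : vfun :=
  (last f.1 x, fun y => if inI (last f.1 x) y then f.2 (x ++ y) else 0).

Definition const_zero (f : vfun) : Prop := forall y, f.2 y = 0.

Definition enveloping (phi : nat -> vfun) (k : nat) : Prop :=
  exists O B : nat -> Prop,
  [/\ (forall a, O a \/ B a), (forall a, ~ (O a /\ B a)) &
   forall v (x : seq nat), size x < k -> slice_def (phi v) x ->
     (~ const_zero (slice (phi v) x) -> forall a, a \in x -> O a) /\
     (forall g : vfun, (exists w, g = phi w) \/ (exists l, g = (l, fun _ => 0)) ->
      forall y : seq nat, size y = size x -> slice_def g y ->
      ~ comparable (slice (phi v) x) (slice g y) ->
      forall l, meet_lvl (slice (phi v) x) (slice g y) l -> B l)].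

(* Main.v *)
Require Import Defs.
From mathcomp Require Import all_boot.
From Stdlib Require Import Classical.
From mathcomp Require Import zify.
Set Implicit Arguments. Unset Strict Implicit. Unset Printing Implicit Defensive.

Section Construction.
Variables (n : nat -> nat) (k : nat) (H : seq nat -> nat).

Definition DL (b : nat) (r : seq nat) : bool :=
  sorted (fun x y => y < x) r && all (fun x => x < b) r.

Definition M (a : nat) : nat := \max_(t < a + k + 3) n t.

Fixpoint downfrom a := match a with 0 => [::] | a'.+1 => a' :: downfrom a' end.
Fixpoint subseqs (s : seq nat) : seq (seq nat) :=
  match s with
  | [::] => [:: [::]]
  | a :: s' => [seq a :: r | r <- subseqs s'] ++ subseqs s'
  end.

Definition cb a := foldr maxn 0
  [seq pickle (a, r, j) | r <- subseqs (downfrom a), j <- iota 0 (M a).+1].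

Fixpoint Lh u := match u with 0 => (cb 0).+1 | u'.+1 => Lh u' + (cb u'.+1).+1 end.
Definition L u := (Lh u).*2.
Definition code (p : nat * seq nat * nat) := (pickle p).*2.+1.

Definition vert_of (c : nat) : option nat :=
  if has (fun a => L a == c) (iota 0 c.+1)
  then Some (find (fun a => L a == c) (iota 0 c.+1)) else None.
Definition blk_of (c : nat) : option (nat * seq nat * nat) :=
  if odd c then unpickle c./2 else None.

Fixpoint Phi (Q : seq nat -> nat) (b : nat) (z : seq nat) : nat :=
  match z with
  | [::] => 0
  | c :: z' =>
    match vert_of c with
    | Some a => if a < b then
                  (match z' with [::] => Q [:: a] | _ => Phi (fun r => Q (a :: r)) a z' end)
                else 0
    | None =>
      match blk_of c, z' with
      | Some (u, S0, j), [::] =>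
          if (u < b) && sorted (fun x y => y < x) (u :: S0) && (0 < j)
          then nat_of_bool (Q (u :: S0) == j) else 0
      | _, _ => 0
      end
    end
  end.

Definition phi v : vfun :=
  (L v, fun z => if inI (L v) z then Phi (fun r => H (v :: r)) v z else 0).

Lemma gt_trans : transitive (fun x y : nat => y < x).
Proof. by move=> x y z h1 h2; exact: ltn_trans h2 h1. Qed.

Lemma le_foldr_max s x : x \in s -> x <= foldr maxn 0 s.
Proof.
elim: s => //= y s IH; rewrite in_cons => /orP[/eqP->|/IH h].
  exact: leq_maxl.
by rewrite (leq_trans h) // leq_maxr.
Qed.

Lemma DL_sub a r : DL a r -> r \in subseqs (downfrom a).
Proof.
elim: a r => [|a IH] r.
  by case: r => [|c r] //; rewrite /DL /= andbF.
case: r => [|c r].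
  move=> _ /=; rewrite mem_cat; apply/orP; right; exact: IH.
rewrite /DL /= => /andP[hs /andP[hc ha]].
have hr : all (fun x => x < c) r.
  by move: hs; rewrite (path_sortedE gt_trans) => /andP[].
have hsr : sorted (fun x y => y < x) r by exact: path_sorted hs.
rewrite mem_cat; case: (ltngtP c a) => ca.
- apply/orP; right; apply: IH; rewrite /DL /= hs /= ca /=.
  by apply/allP => x xr; apply: ltn_trans ca; exact: (allP hr).
- by rewrite ltnS leqNgt ca in hc.
- apply/orP; left; rewrite ca; apply: map_f; apply: IH.
  by rewrite /DL hsr -ca hr.
Qed.

Lemma cb_ge u r j : DL u r -> j <= M u -> pickle (u, r, j) <= cb u.
Proof.
move=> hr hj; apply: le_foldr_max.
apply: (@allpairs_f _ _ _ (fun r j => pickle (u, r, j))); first exact: DL_sub.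
by rewrite mem_iota /= add0n ltnS.
Qed.

Lemma cb_lt u : cb u < Lh u.
Proof. by case: u => [|u] //=; rewrite addnS ltnS leq_addl. Qed.

Lemma Lh_lt u w : u < w -> Lh u < Lh w.
Proof.
elim: w => // w IH; rewrite ltnS leq_eqVlt => /orP[/eqP->|h] /=.
  by rewrite addnS ltnS leq_addr.
by rewrite (ltn_trans (IH h)) // addnS ltnS leq_addr.
Qed.

Lemma L_lt u w : (L u < L w) = (u < w).
Proof.
apply/idP/idP => h; last by rewrite /L ltn_double Lh_lt.
case: (ltngtP u w) h => // [wu|->]; last by rewrite ltnn.
by rewrite /L ltn_double => /ltn_trans/(_ (Lh_lt wu)); rewrite ltnn.
Qed.

Lemma L_inj : injective L.
Proof.
move=> u w e; case: (ltngtP u w) => // h.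
  by move: (h); rewrite -L_lt e ltnn.
by move: (h); rewrite -L_lt e ltnn.
Qed.

Lemma L_ge u : u <= L u.
Proof.
elim: u => // u IH; apply: leq_ltn_trans IH _; by rewrite L_lt.
Qed.

Lemma L_even u : odd (L u) = false.
Proof. by rewrite /L odd_double. Qed.

Lemma code_lt u r j : DL u r -> j <= M u -> code (u, r, j) < L u.
Proof.
move=> hr hj; rewrite /code /L -doubleS leq_double.
exact: leq_ltn_trans (cb_ge hr hj) (cb_lt u).
Qed.

Lemma vert_ofP c a : vert_of c = Some a -> L a = c.
Proof.
rewrite /vert_of; case: ifP => // hh [<-].
have := nth_find 0 hh; rewrite nth_iota ?add0n; first by move/eqP.
by move: hh; rewrite has_find size_iota.
Qed.

Lemma vert_ofL a : vert_of (L a) = Some a.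
Proof.
have hh : has (fun a' => L a' == L a) (iota 0 (L a).+1).
  by apply/hasP; exists a => //; rewrite mem_iota /= add0n ltnS L_ge.
have := @vert_ofP (L a); rewrite /vert_of hh => /(_ _ erefl) /L_inj ->.
by [].
Qed.

Lemma vert_of_odd c : odd c -> vert_of c = None.
Proof.
move=> oc; case e: (vert_of c) => [a|] //.
by move: oc; rewrite -(vert_ofP e) L_even.
Qed.

Lemma blk_of_code p : blk_of (code p) = Some p.
Proof.
rewrite /blk_of /code /= odd_double /=.
by rewrite uphalf_double pickleK.
Qed.

Lemma blk_of_odd c p : blk_of c = Some p -> odd c.
Proof. by rewrite /blk_of; case: (odd c). Qed.


Lemma sorted_cons_gt u S : path (fun x y => y < x) u S =
  all (fun x => x < u) S && sorted (fun x y => y < x) S.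
Proof. by rewrite (path_sortedE gt_trans). Qed.

Lemma DL_cons a b r : a < b -> DL a r -> DL b (a :: r).
Proof.
move=> ab /andP[hs ha]; rewrite /DL /= sorted_cons_gt ha hs /= ab /=.
by apply/allP => x /(allP ha) xa; exact: ltn_trans xa ab.
Qed.

Lemma Phi_ext Q1 Q2 b z :
  (forall r, DL b r -> r != [::] -> Q1 r = Q2 r) -> Phi Q1 b z = Phi Q2 b z.
Proof.
elim: z Q1 Q2 b => //= c z IH Q1 Q2 b hQ.
case: (vert_of c) => [a|].
  case: ifP => // ab; case: z IH => [|c' z'] IH.
    by apply: hQ => //; rewrite /DL /= ab.
  by apply: IH => r hr _; apply: hQ => //; exact: DL_cons.
case: (blk_of c) => [[[u S0] j]|] //; case: z IH => // IH.
case: ifP => // /andP[/andP[ub hs] j0]; rewrite hQ //.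
apply: DL_cons => //; move: hs; rewrite sorted_cons_gt => /andP[h1 h2].
by rewrite /DL h1 h2.
Qed.

Lemma Phi0 Q b z : (forall r, Q r = 0) -> Phi Q b z = 0.
Proof.
elim: z Q b => //= c z IH Q b hQ.
case: (vert_of c) => [a|].
  by case: ifP => // _; case: z IH => [|c' z'] IH; [exact: hQ | apply: IH].
case: (blk_of c) => [[[u S0] j]|] //; case: z IH => // IH.
by case: ifP => // /andP[_ j0]; rewrite hQ; case: j j0.
Qed.

Lemma Phi_nz_head Q b c z : Phi Q b (c :: z) != 0 ->
  odd c \/ exists a, c = L a /\ a < b.
Proof.
rewrite /=; case e: (vert_of c) => [a|].
  by case: ifP => ab // _; right; exists a; rewrite (vert_ofP e).
case e': (blk_of c) => [p|]; first by left; exact: blk_of_odd e'.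
by case: z.
Qed.

Lemma cat_nonnil (x y : seq nat) : y != [::] -> exists c z, x ++ y = c :: z.
Proof. by case: x => [|c x]; case: y => // d y _; [exists d, y | exists c, (x ++ d :: y)]. Qed.

Lemma Phi_prefix Q b x :
  (forall y, y != [::] -> Phi Q b (x ++ y) = 0) \/
  exists W, [/\ x = map L W, DL b W &
    forall y, y != [::] -> Phi Q b (x ++ y) = Phi (fun r => Q (W ++ r)) (last b W) y].
Proof.
elim: x Q b => [|c x IH] Q b.
  by right; exists [::]; split.
case e: (vert_of c) => [a|].
  case ab: (a < b).
    case: (IH (fun r => Q (a :: r)) a) => [h|[W [hx hW h]]].
      left => y y0; rewrite /= e ab.
      have [c' [z' ey]] := cat_nonnil x y0; rewrite ey -ey; exact: h.
    right; exists (a :: W); split.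
    - by rewrite /= hx (vert_ofP e).
    - exact: DL_cons.
    move=> y y0; rewrite /= e ab.
    have [c' [z' ey]] := cat_nonnil x y0; rewrite ey -ey; exact: h.
  by left => y _; rewrite /= e ab.
left => y y0; rewrite /= e.
have [c' [z' ey]] := cat_nonnil x y0; rewrite ey.
by case: (blk_of c) => [[[u S0] j]|].
Qed.

Lemma Phi_vert Q b W : DL b W -> W != [::] -> Phi Q b (map L W) = Q W.
Proof.
elim: W Q b => // a W IH Q b; rewrite /DL /= sorted_cons_gt.
move=> /andP[/andP[ha hs] /andP[ab hb]] _; rewrite vert_ofL ab.
case: W IH ha hs hb => [|w W] IH ha hs hb //.
by rewrite IH //; rewrite /DL hs ha.
Qed.

Lemma Phi_code Q b u r j : u < b -> DL u r -> 0 < j ->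
  Phi Q b [:: code (u, r, j)] = (Q (u :: r) == j).
Proof.
move=> ub /andP[hs ha] j0 /=.
rewrite vert_of_odd; last by rewrite /code /= odd_double.
by rewrite blk_of_code ub sorted_cons_gt ha hs j0.
Qed.

Lemma Phi_headL Q b u y : u < b ->
  Phi Q b (L u :: y) =
  match y with [::] => Q [:: u] | _ => Phi (fun r => Q (u :: r)) u y end.
Proof. by move=> ub /=; rewrite vert_ofL ub. Qed.

Lemma lt_sigmaI i v : v < n i.+1 + 2 ->
  (v != 0 -> exists t, i < t /\ 0 < n t) -> lt_sigma n i v.
Proof.
move=> h1 h2; split => // nmu; case: v h1 h2 => // v _ /(_ isT) [t [it nt]].
exfalso; apply: nmu => [[m [m1 nm hj mi]]].
by move: nt; rewrite hj // (leq_ltn_trans mi it).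
Qed.

Lemma lt_sigma0 i : lt_sigma n i 0.
Proof. by apply: lt_sigmaI; rewrite ?addn2. Qed.

Lemma Phi_bound Q b z d : (forall r, Q r <= n (size r + d.+1)) -> z != [::] ->
  lt_sigma n (size z + d) (Phi Q b z).
Proof.
elim: z Q b d => // c z IH Q b d hQ _ /=.
case e: (vert_of c) => [a|].
  case ab: (a < b); last exact: lt_sigma0.
  case: z IH => [|c' z'] IH.
    have e1 : ((size (@nil nat)).+1 + d).+1 = size [:: a] + d.+1 by rewrite /= addnS.
    apply: lt_sigmaI; first by rewrite e1 (leq_ltn_trans (hQ _)) // addn2.
    move=> hq; exists (size [:: a] + d.+1); split; first by rewrite -e1.
    by move: (hQ [:: a]) hq; case: (Q _) => // q; case: (n _).
  rewrite addSn -addnS; apply: IH => // r.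
  by move: (hQ (a :: r)); rewrite /= addSn -addnS.
case: (blk_of c) => [[[u S0] j]|] /=; last exact: lt_sigma0.
case: z IH => [|c' z'] IH /=; last exact: lt_sigma0.
case hc: (_ && _); last exact: lt_sigma0.
apply: lt_sigmaI; first by case: (_ == _); rewrite ?ltn_addl.
case hqj: (Q (u :: S0) == j) => // _; exists (size (u :: S0) + d.+1); split.
  by rewrite /=; lia.
move: hc (hQ (u :: S0)) => /andP[_ j0]; rewrite (eqP hqj).
by case: (n _) j0 => //; lia.
Qed.

Lemma DL_size u r : DL u r -> size r <= u.
Proof.
move=> /andP[hs ha].
have hu : uniq r by apply: (sorted_uniq gt_trans) hs => x; rewrite ltnn.
rewrite -(size_iota 0 u); apply: uniq_leq_size hu _ => x xr.
by rewrite mem_iota /= add0n (allP ha).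
Qed.

Lemma last_le l x : all (fun a => a < l) x -> last l x <= l.
Proof.
case: x => //= c x; elim: x c => [|d x IH] c /=.
  by rewrite andbT => /ltnW.
by move=> /and3P[_ hd hx]; apply: IH; rewrite hd.
Qed.

Lemma inI_cat l x y : sorted (fun a b => b < a) x -> all (fun a => a < l) x ->
  inI (last l x) y -> inI l (x ++ y).
Proof.
move=> hs ha /and3P[y0 hys hya]; rewrite /inI size_cat all_cat ha /=.
rewrite (leq_trans y0) ?leq_addl //=.
have hya' : all (fun a => a < l) y.
  by apply/allP => a /(allP hya) h; apply: leq_trans h (last_le ha).
rewrite hya' andbT.
case: x hs ha {hya'} hya => //= c x hs _ hya.
by rewrite cat_path hs /= sorted_cons_gt hya hys.
Qed.

Lemma inI_mono l l' y : l <= l' -> inI l y -> inI l' y.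
Proof.
move=> ll /and3P[h1 h2 h3]; rewrite /inI h1 h2 /=.
by apply/allP => a /(allP h3) h; exact: leq_trans h ll.
Qed.

Lemma inI_succ l y : inI l.+1 y -> ~~ inI l y ->
  exists y', y = l :: y' /\ (y' = [::] \/ inI l y').
Proof.
case: y => // c y /and3P[_ hs /= /andP[hc ha]] hn.
move: hs; rewrite /= sorted_cons_gt => /andP[hyc hys].
have cl : c = l.
  apply/eqP; rewrite eqn_leq -ltnS hc /= leqNgt; apply/negP => cl.
  move: hn; rewrite /inI /= cl sorted_cons_gt hyc hys /=.
  by apply/negP/negPn/allP => a /(allP hyc) ac; exact: ltn_trans ac cl.
subst c; exists y; split => //.
case: y hyc hys {ha hn} => [|d y] hyc hys; [by left | right].
by rewrite /inI hys hyc.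
Qed.

Definition good (s : vfun) := exists Q b,
  [/\ (forall y, s.2 y = if inI s.1 y then Phi Q b y else 0),
      (forall u, L u < s.1 -> u < b) &
      (forall u r, DL u r -> Q (u :: r) <= M u)].

Lemma good_of_zero s : (forall y, s.2 y = 0) -> good s.
Proof.
move=> hz; exists (fun _ => 0), s.1; split => //.
- by move=> y; rewrite hz; case: ifP => // _; rewrite Phi0.
- by move=> u hu; exact: leq_ltn_trans (L_ge u) hu.
Qed.

Lemma agree_step s1 s2 u : good s1 -> good s2 -> L u < s1.1 -> L u < s2.1 ->
  agree s1 s2 (L u) -> agree s1 s2 (L u).+1.
Proof.
move=> [Q1 [b1 [h1 hb1 hM1]]] [Q2 [b2 [h2 hb2 hM2]]] lt1 lt2 ag y hy.
case hyl: (inI (L u) y); first exact: ag.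
have [y' [ey hy']] := inI_succ hy (negbT hyl); subst y.
rewrite h1 h2 !(inI_mono _ hy) // !Phi_headL ?hb1 ?hb2 //.
have hQ : forall r, DL u r -> Q1 (u :: r) = Q2 (u :: r).
  move=> r hr.
  have hj : forall j, 0 < j -> j <= M u -> (Q1 (u :: r) == j) = (Q2 (u :: r) == j).
    move=> j j0 jM.
    have hin : inI (L u) [:: code (u, r, j)] by rewrite /inI /= code_lt.
    have := ag _ hin; rewrite h1 h2 !(inI_mono _ hin) ?(ltnW lt1) ?(ltnW lt2) //.
    rewrite !Phi_code ?hb1 ?hb2 //.
    by case: (Q1 _ == j); case: (Q2 _ == j).
  have m1 := hM1 u r hr; have m2 := hM2 u r hr.
  case: (posnP (Q1 (u :: r))) => e1.
    case: (posnP (Q2 (u :: r))) => e2; first by rewrite e1 e2.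
    have := hj _ e2 m2; rewrite e1 eqxx => /eqP e.
    by rewrite -e in e2.
  by have := hj _ e1 m1; rewrite eqxx => /esym/eqP.
clear hyl hy; case: y' hy' => [|c y''] hy'; first by rewrite hQ.
by apply: Phi_ext => r hr _; exact: hQ.
Qed.

Lemma good_nz s c y : good s -> s.2 (c :: y) != 0 -> odd c \/ exists a, c = L a.
Proof.
move=> [Q [b [h _ _]]]; rewrite h; case: ifP => // _ /Phi_nz_head [|[a [e _]]].
  by left.
by right; exists a.
Qed.

Lemma meet_odd s1 s2 l : good s1 -> good s2 -> ~ Defs.comparable s1 s2 ->
  meet_lvl s1 s2 l -> odd l.
Proof.
move=> g1 g2 nc [l1 l2 ag mx].
have lt1 : l < s1.1.
  rewrite ltn_neqAle l1 andbT; apply/eqP => e; apply: nc; left; split.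
    by rewrite -e.
  by rewrite -e.
have lt2 : l < s2.1.
  rewrite ltn_neqAle l2 andbT; apply/eqP => e; apply: nc; right; split.
    by rewrite -e.
  by rewrite -e => y hy; rewrite ag.
have nag : ~ agree s1 s2 l.+1.
  by move=> h; have := mx _ lt1 lt2 h; rewrite ltnn.
have [y [hy ne]] : exists y, inI l.+1 y /\ s1.2 y <> s2.2 y.
  apply: NNPP => hn; apply: nag => y hy; apply: NNPP => hne; apply: hn.
  by exists y.
have hyl : ~~ inI l y by apply/negP => h; exact: ne (ag y h).
have [y' [ey _]] := inI_succ hy hyl; subst y.
have hnz : s1.2 (l :: y') != 0 \/ s2.2 (l :: y') != 0.
  case e1: (s1.2 (l :: y')) => [|?]; last by left.
  by right; apply/eqP => e2; apply: ne; rewrite e1 e2.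
have [|[a ea]] : odd l \/ exists a, l = L a.
- by case: hnz => h; [exact: good_nz g1 h | exact: good_nz g2 h].
- by [].
subst l; exfalso; apply: nag; exact: agree_step.
Qed.

Lemma inI_nonnil l y : inI l y -> y != [::].
Proof. by case: y. Qed.

Lemma slice_phi_good (hH : is_hyp n H) v x : size x < k -> slice_def (phi v) x ->
  good (slice (phi v) x).
Proof.
move=> hk /andP[hs ha].
case: (Phi_prefix (fun r => H (v :: r)) v x) => [hz|[W [hx hW heq]]].
  apply: good_of_zero => y /=; case: ifP => // hy.
  by rewrite (inI_cat hs ha hy) hz // (inI_nonnil hy).
exists (fun r => H (v :: W ++ r)), (last v W); split.
- move=> y /=; case: ifP => // hy.
  by rewrite (inI_cat hs ha hy) heq // (inI_nonnil hy).
- by move=> u /=; rewrite hx last_map L_lt.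
- move=> u r hr; case: hH => _ hb _.
  apply: leq_trans (hb _) _.
  have ht : size (v :: W ++ u :: r) < u + k + 3.
    have := DL_size hr; move: hk; rewrite hx size_map /= size_cat /=; lia.
  exact: (leq_bigmax (Ordinal ht)).
Qed.

Lemma slice_phi_O v x : slice_def (phi v) x -> ~ const_zero (slice (phi v) x) ->
  forall a, a \in x -> ~~ odd a.
Proof.
move=> /andP[hs ha] nz a ax.
case: (Phi_prefix (fun r => H (v :: r)) v x) => [hz|[W [hx _ _]]].
  exfalso; apply: nz => y /=; case: ifP => // hy.
  by rewrite (inI_cat hs ha hy) hz // (inI_nonnil hy).
by move: ax; rewrite hx => /mapP[w _ ->]; rewrite L_even.
Qed.

Lemma slice_zero_good l y : good (slice (l, fun _ => 0) y).
Proof. by apply: good_of_zero => z /=; case: ifP. Qed.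

Lemma phi_inT (hH : is_hyp n H) v : inT n 0 (phi v).
Proof.
split => x /=; last by move/negbTE => ->.
move=> hx; rewrite hx addn0 -[size x]addn0; apply: Phi_bound; last exact: inI_nonnil hx.
by move=> r; case: hH => _ hb _; rewrite addn1; exact: (hb (v :: r)).
Qed.

Lemma sorted_geq_gt x s : path (fun a b => b <= a) x s -> uniq (x :: s) ->
  path (fun a b => b < a) x s.
Proof.
elim: s x => //= y s IH x /andP[yx hp]; rewrite in_cons negb_or => /andP[/andP[xy _] /andP[ys us]].
rewrite ltn_neqAle yx eq_sym xy /=; apply: IH => //=; by rewrite ys.
Qed.

Lemma phi_label (hH : is_hyp n H) s : uniq s -> 2 <= size s -> H s = labelG n (map phi s).
Proof.
move=> us hs; rewrite /labelG sort_map.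
set s' := sort _ s.
have ps : perm_eq s' s by rewrite perm_sort.
have us' : uniq s' by rewrite sort_uniq.
have ss' : sorted (relpre phi (fun a b : vfun => b.1 <= a.1)) s'.
  by apply: sort_sorted => a b /=; exact: leq_total.
have sgt : sorted (fun a b => b < a) s'.
  have sge : sorted (fun a b => b <= a) s'.
    by apply: sub_sorted ss' => a b /=; rewrite leqNgt L_lt -leqNgt.
  by case: s' sge us' {ps ss'} => //= v0 W hp hu; apply: sorted_geq_gt.
have -> : sorted (fun a b : vfun => b.1 < a.1) (map phi s').
  by rewrite sorted_map; apply: sub_sorted sgt => a b /=; rewrite L_lt.
have sz : size s' = size s by rewrite (perm_size ps).
case es: s' sz sgt ps => [|v0 W] sz sgt ps; first by rewrite -sz in hs.
rewrite /= -map_comp.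
have -> : [seq (lvl \o phi) i | i <- W] = map L W by [].
have hW : DL v0 W by move: sgt; rewrite /= sorted_cons_gt /DL andbC.
have W0 : W != [::] by case: W sz {es sgt ps hW} => // sz; rewrite -sz in hs.
have hin : inI (L v0) (map L W).
  move: hW => /andP[h1 h2]; rewrite /inI size_map lt0n size_eq0 W0 /=.
  rewrite sorted_map; apply/andP; split.
    by apply: sub_sorted h1 => a b /=; rewrite L_lt.
  by rewrite all_map; apply: sub_all h2 => a /=; rewrite L_lt.
rewrite hin Phi_vert //.
case: hH => _ hb hp.
have -> : H (v0 :: W) = H s by apply: hp.
rewrite size_map; case: (posnP (H s)) => [->|h0] //.
by rewrite hb.
Qed.

End Construction.

Theorem lemma4p4 (n : nat -> nat) (no_unary : n 1 = 0)
  (H : seq nat -> nat) (H_hyp : is_hyp n H) (H_univ : universal n H)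
  (k : nat) :
  exists phi : nat -> vfun, embHG n H phi /\ enveloping phi k.
Proof.
exists (phi n k H); split.
  split.
  - by move=> v; exact: phi_inT.
  - by move=> v w vw; left; rewrite /= L_lt.
  - by move=> s us hs; exact: phi_label.
exists (fun a => ~~ odd a), (fun a => odd a); split.
- by move=> a; case: (odd a); [right|left].
- by move=> a [h1 h2]; rewrite h2 in h1.
move=> v x hk hx; split; first exact: slice_phi_O.
move=> g hg y hy hgy nc l hm; apply: meet_odd hm => //.
  exact: slice_phi_good.
case: hg => [[w eg]|[l0 eg]]; subst g.
  by apply: slice_phi_good => //; rewrite hy.
exact: slice_zero_good.
Qed.
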